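(* Assume the abstract setting of the context. Then there exist $\epsilon_0>0$, $D'>0$ and $\lambda'>0$ such that \[ \|\mathcal L_{\omega,\epsilon}^n h\|_s\le D'e^{-\lambda' n}\|h\|_s \] for all $\epsilon\in I$ with $|\epsilon|\le\epsilon_0$, all $\omega\in\Omega'$, all $n\in\mathbb N$ and all $h\in\mathcal B_s^0$.
   Context: $(\Omega,\mathcal F,\mathbb P)$ is a probability space and $\sigma\colon\Omega\to\Omega$ an invertible, measurable, $\mathbb P$-preserving ergodic map. $(\mathcal B_w,\|\cdot\|_w)$, $(\mathcal B_s,\|\cdot\|_s)$ are Banach spaces with $\mathcal B_s\subset\mathcal B_w$ and $\|h\|_w\le\|h\|_s$ on $\mathcal B_s$. $\psi$ is a nonzero bounded linear functional on $\mathcal B_s$ admitting a bounded extension to $\mathcal B_w$; $\mathcal B_s^0:=\{h\in\mathcal B_s:\psi(h)=0\}$. $I\subset\mathbb R$ is an interval containing $0$; for $\epsilon\in I$, $\omega\in\Omega$, $\mathcal L_{\omega,\epsilon}$ is a bounded linear operator on both $\mathcal B_s$ and $\mathcal B_w$, with $\omega\mapsto\mathcal L_{\omega,\epsilon}h$ measurable for each $h\in\mathcal B_s$ and $\epsilon\in I$. $\mathcal L_\omega:=\mathcal L_{\omega,0}$, $\mathcal L^n_{\omega,\epsilon}:=\mathcal L_{\sigma^{n-1}\omega,\epsilon}\circ\cdots\circ\mathcal L_{\omega,\epsilon}$, $\mathcal L^n_\omega:=\mathcal L^n_{\omega,0}$. There are constants $C,D,\lambda>0$, $\lambda_1\in(0,1)$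 and a measurable $\sigma$-invariant set $\Omega'\subset\Omega$ with $\mathbb P(\Omega')=1$ such that for all $\epsilon\in I$, $\omega\in\Omega'$, $n\in\mathbb N$: (a) $\|\mathcal L_\omega^n h\|_s\le De^{-\lambda n}\|h\|_s$ for $h\in\mathcal B_s^0$; (b) $\|\mathcal L^n_{\omega,\epsilon}h\|_s\le C\lambda_1^n\|h\|_s+C\|h\|_w$ for $h\in\mathcal B_s$; (c) $\|(\mathcal L_{\omega,\epsilon}-\mathcal L_\omega)h\|_w\le C|\epsilon|\,\|h\|_s$ for $h\in\mathcal B_s$; (d) $\|\mathcal L^n_{\omega,\epsilon}\|_{\mathcal B_w\to\mathcal B_w}\le C$; (e) $\psi(\mathcal L_{\omega,\epsilon}h)=\psi(h)$ for $h\in\mathcal B_s$. *)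

(* Defs.v *)
From HB Require Import structures.
From mathcomp Require Import all_boot all_order all_algebra.
From mathcomp Require Import all_classical all_reals all_analysis.
Set Implicit Arguments. Unset Strict Implicit. Unset Printing Implicit Defensive.
Import Order.TTheory GRing.Theory Num.Theory.
Import numFieldNormedType.Exports.
Local Open Scope classical_set_scope.
Local Open Scope ring_scope.

Definition bounded_linear (R : realType) (V W : normedModType R) (f : V -> W) :=
  (forall (a : R) (u v : V), f (a *: u + v) = a *: f u + f v) /\
  exists M : R, forall x, `|f x| <= M * `|x|.

Definition borel_measurable (d : measure_display) (T : measurableType d)
  (R : realType) (V : normedModType R) (f : T -> V) :=
  forall U : set V, open U -> measurable (f @^-1` U).

Definition invertible_mpt_ergodic (d : measure_display) (T : measurableType d)
  (R : realType) (P : probability T R) (sigma : T -> T) :=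
  (exists sigma_inv : T -> T,
      cancel sigma sigma_inv /\ cancel sigma_inv sigma /\
      measurable_fun setT sigma /\ measurable_fun setT sigma_inv) /\
  (forall A, measurable A -> P (sigma @^-1` A) = P A) /\
  (forall A, measurable A -> sigma @^-1` A = A -> P A = 0%E \/ P A = 1%E).

Fixpoint cocycle (T V : Type) (sigma : T -> T) (L : T -> V -> V)
  (n : nat) (omega : T) (h : V) : V :=
  match n with
  | 0 => h
  | n'.+1 => L (iter n' sigma omega) (cocycle sigma L n' omega h)
  end.

(* Main.v *)
Require Import Defs.
From HB Require Import structures.
From mathcomp Require Import all_boot all_order all_algebra.
From mathcomp Require Import all_classical all_reals all_analysis.
From mathcomp Require Import ring lra.
Import Order.TTheory GRing.Theory Num.Theory.
Import numFieldNormedType.Exports.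
Local Open Scope classical_set_scope.
Local Open Scope ring_scope.

Lemma geom_small (R : realType) (q e : R) : 0 <= q < 1 -> 0 < e ->
  exists N : nat, (0 < N)%N /\ q ^+ N <= e.
Proof.
move=> /andP[q0 q1] e0.
have Hq : `|q| < 1 by rewrite ger0_norm.
have H : \forall t \near \oo, `|q ^+ t| <= e by apply: (@cvgr0_norm_le _ _ _ _ _ _ (cvg_expr Hq) _ e0).
have [N [HN1 HN2]] := filter_ex (filterI H (nbhs_infty_gt 0)).
exists N; split => //.
by move: HN1; rewrite /= ger0_norm // exprn_ge0.
Qed.

Lemma cocycle_S (T V : Type) (sigma : T -> T) (L : T -> V -> V) n w h :
  cocycle sigma L n.+1 w h = cocycle sigma L n (sigma w) (L w h).
Proof.
elim: n => [//|n IH] /=.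
by rewrite -IH /= -iterSr.
Qed.

Lemma cocycle_add (T V : Type) (sigma : T -> T) (L : T -> V -> V) n m w h :
  cocycle sigma L (n + m) w h = cocycle sigma L n (iter m sigma w) (cocycle sigma L m w h).
Proof.
elim: n => [//|n IH] /=.
by rewrite IH iterD.
Qed.

Lemma cocycle_inv (T V : Type) (sigma : T -> T) (L : T -> V -> V) (Q : T -> Prop) (P : V -> Prop) :
  (forall w, Q w -> Q (sigma w)) -> (forall w h, Q w -> P h -> P (L w h)) ->
  forall n w h, Q w -> P h -> P (cocycle sigma L n w h).
Proof.
move=> HQ HP; elim=> [//|n IH] w h Qw Ph /=.
apply: HP; last exact: IH.
by elim: n {IH} => [//|n IHn] /=; apply: HQ.
Qed.

Lemma cocycle_comm (T V W : Type) (sigma : T -> T) (L : T -> V -> V) (M : T -> W -> W)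
  (f : V -> W) : (forall w h, f (L w h) = M w (f h)) ->
  forall n w h, f (cocycle sigma L n w h) = cocycle sigma M n w (f h).
Proof. by move=> H; elim=> [//|n IH] w h /=; rewrite H IH. Qed.

Lemma bl_sub (R : realType) (V W : normedModType R) (f : V -> W) :
  bounded_linear f -> forall u v, f (u - v) = f u - f v.
Proof.
move=> [Hl _] u v.
have -> : u - v = (-1) *: v + u by rewrite scaleN1r addrC.
by rewrite Hl scaleN1r addrC.
Qed.
Arguments bl_sub {R V W f}.

Theorem proposition3p2
  (R : realType) (d : measure_display) (Omega : measurableType d)
  (P : probability Omega R) (sigma : Omega -> Omega)
  (Hsigma : invertible_mpt_ergodic P sigma)
  (Bw Bs : completeNormedModType R)
  (iota : Bs -> Bw) (* the inclusion B_s ⊂ B_w *)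
  (Hiota_lin : bounded_linear iota) (Hiota_inj : injective iota)
  (Hiota_norm : forall h : Bs, `|iota h| <= `|h|)
  (psi : Bs -> R) (psiw : Bw -> R)
  (Hpsi : bounded_linear (psi : Bs -> R^o)) (Hpsi_nz : exists h, psi h != 0)
  (Hpsiw : bounded_linear (psiw : Bw -> R^o))
  (Hpsi_ext : forall h, psiw (iota h) = psi h)
  (I : set R) (HI : is_interval I) (HI0 : I 0)
  (Ls : Omega -> R -> Bs -> Bs) (Lw : Omega -> R -> Bw -> Bw)
  (HLs : forall omega eps, I eps -> bounded_linear (Ls omega eps))
  (HLw : forall omega eps, I eps -> bounded_linear (Lw omega eps))
  (HLcompat : forall omega eps h, I eps -> iota (Ls omega eps h) = Lw omega eps (iota h))
  (HLmeas : forall eps h, I eps -> borel_measurable (fun omega => Ls omega eps h))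
  (C D lam lam1 : R) (HC : 0 < C) (HD : 0 < D) (Hlam : 0 < lam)
  (Hlam1 : 0 < lam1 < 1)
  (Omega' : set Omega) (HO'm : measurable Omega')
  (HO'inv : sigma @^-1` Omega' = Omega') (HO'P : P Omega' = 1%E)
  (Ha : forall omega n h, Omega' omega -> (0 < n)%N -> psi h = 0 ->
      `|cocycle sigma (fun w => Ls w 0) n omega h| <= D * expR (- lam * n%:R) * `|h|)
  (Hb : forall eps omega n h, I eps -> Omega' omega -> (0 < n)%N ->
      `|cocycle sigma (fun w => Ls w eps) n omega h|
        <= C * lam1 ^+ n * `|h| + C * `|iota h|)
  (Hc : forall eps omega h, I eps -> Omega' omega ->
      `|Lw omega eps (iota h) - Lw omega 0 (iota h)| <= C * `|eps| * `|h|)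
  (Hd : forall eps omega n h, I eps -> Omega' omega -> (0 < n)%N ->
      `|cocycle sigma (fun w => Lw w eps) n omega h| <= C * `|h|)
  (He : forall eps omega h, I eps -> Omega' omega -> psi (Ls omega eps h) = psi h) :
  exists eps0 D' lam' : R, [/\ 0 < eps0, 0 < D', 0 < lam' &
    forall eps omega n h, I eps -> `|eps| <= eps0 -> Omega' omega -> psi h = 0 ->
      `|cocycle sigma (fun w => Ls w eps) n omega h| <= D' * expR (- lam' * n%:R) * `|h|].
Proof.
have HO : forall w, Omega' w -> Omega' (sigma w).
  by move=> w Hw; have : (sigma @^-1` Omega') w by rewrite HO'inv.
have HOit : forall k w, Omega' w -> Omega' (iter k sigma w).
  by elim=> [//|k IH] w Hw /=; apply: HO; apply: IH.
have Hpsi0 : forall eps n w h, I eps -> Omega' w -> psi h = 0 ->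
    psi (cocycle sigma (fun w => Ls w eps) n w h) = 0.
  move=> eps n w h Ie Hw Hh.
  apply: (@cocycle_inv _ _ sigma (fun w => Ls w eps) Omega' (fun h => psi h = 0)) => //.
  by move=> w' h' Hw' Hh'; rewrite He.
have Hbnd : forall eps n w h, I eps -> Omega' w ->
    `|cocycle sigma (fun w => Ls w eps) n w h| <= (2 * C + 1) * `|h|.
  move=> eps [|n] w h Ie Hw.
    by rewrite /= -[X in X <= _]mul1r ler_wpM2r // lerDr mulr_ge0 // ltW.
  apply: le_trans (Hb _ _ _ _ Ie Hw (ltn0Sn n)) _.
  have h1 : lam1 ^+ n.+1 <= 1.
    by case/andP: Hlam1 => a b; rewrite exprn_ile1 // ltW.
  have h2 : 0 <= lam1 ^+ n.+1 by case/andP: Hlam1 => a b; rewrite exprn_ge0 // ltW.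
  have h3 := Hiota_norm h.
  have h5 : C * lam1 ^+ n.+1 * `|h| <= C * `|h|.
    rewrite -mulrA; apply: ler_wpM2l; first exact: ltW.
    by apply: ler_piMl.
  have h6 : C * `|iota h| <= C * `|h| by apply: ler_wpM2l => //; exact: ltW.
  have h7 : 0 <= `|h| by [].
  lra.
have Hdw : forall eps n w x, I eps -> Omega' w ->
    `|cocycle sigma (fun w => Lw w eps) n w x| <= (C + 1) * `|x|.
  move=> eps [|n] w x Ie Hw.
    by rewrite /= -[X in X <= _]mul1r ler_wpM2r // lerDr ltW.
  apply: le_trans (Hd _ _ _ _ Ie Hw (ltn0Sn n)) _.
  by rewrite ler_wpM2r // lerDl.
have Hlin : forall eps n w x y, I eps ->
    cocycle sigma (fun w => Lw w eps) n w (x - y) =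
    cocycle sigma (fun w => Lw w eps) n w x - cocycle sigma (fun w => Lw w eps) n w y.
  move=> eps n w x y Ie; elim: n => [//|n IH] /=.
  by rewrite IH (bl_sub (HLw _ _ Ie)).
have Hcomm : forall eps n w h, I eps ->
    iota (cocycle sigma (fun w => Ls w eps) n w h) = cocycle sigma (fun w => Lw w eps) n w (iota h).
  by move=> eps n w h Ie; apply: cocycle_comm => w' h'; apply: HLcompat.
have tele : forall eps, I eps -> forall n w h, Omega' w ->
    `|iota (cocycle sigma (fun w => Ls w eps) n w h) - iota (cocycle sigma (fun w => Ls w 0) n w h)|
      <= C * (C + 1) * `|eps| * \sum_(j < n) `|cocycle sigma (fun w => Ls w 0) j w h|.
  move=> eps Ie; elim=> [|n IH] w h Hw.
    by rewrite /= subrr normr0 big_ord0 mulr0.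
  rewrite !cocycle_S.
  set A := iota (cocycle _ _ n _ (Ls w eps h)).
  set M := iota (cocycle sigma (fun w => Ls w eps) n (sigma w) (Ls w 0 h)).
  set B := iota (cocycle _ _ n _ (Ls w 0 h)).
  have -> : A - B = (A - M) + (M - B) by rewrite addrA subrK.
  apply: le_trans (ler_normD _ _) _.
  have H1 : `|A - M| <= C * (C + 1) * `|eps| * `|h|.
    rewrite /A /M !Hcomm // -Hlin // !HLcompat //.
    apply: le_trans (Hdw _ _ _ _ Ie (HO _ Hw)) _.
    have -> : C * (C + 1) * `|eps| * `|h| = (C + 1) * (C * `|eps| * `|h|) by ring.
    apply: ler_wpM2l; first by rewrite addr_ge0 // ltW.
    by apply: Hc.
  have H2 := IH (sigma w) (Ls w 0 h) (HO _ Hw).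
  rewrite big_ord_recl mulrDr.
  apply: lerD => //.
  apply: le_trans H2 _; apply: ler_wpM2l.
    by rewrite mulr_ge0 // mulr_ge0 ?addr_ge0 ?ler01 ?ltW.
  by apply: ler_sum => i _; rewrite -cocycle_S.
pose K := C * (C + 1); pose M := 2 * C + 1; pose c := expR (-1 : R).
have c0 : 0 < c by apply: expR_gt0.
have K0 : 0 < K by rewrite /K mulr_gt0 // addr_gt0.
have M0 : 0 < M by rewrite /M addr_gt0 // mulr_gt0.
have M1 : 1 <= M by rewrite /M lerDr mulr_ge0 // ltW.
pose q := Num.max lam1 (expR (- lam)).
have q01 : 0 <= q < 1.
  case/andP: Hlam1 => a b.
  rewrite le_max gt_max (ltW a) b /= expR_lt1 oppr_lt0 Hlam.
  done.
pose del := c / (4 * C * (M + D)).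
have del0 : 0 < del by rewrite /del divr_gt0 // !mulr_gt0 // addr_gt0.
have [N [N0 HN]] := geom_small _ _ _ q01 del0.
have Nr0 : 0 < (N%:R : R) by rewrite ltr0n.
pose eps0 := c / (2 * C * K * N%:R * M).
have eps00 : 0 < eps0.
  apply: divr_gt0 => //.
  by do 4 (apply: mulr_gt0 => //).
have Ha1 : lam1 ^+ N <= del.
  apply: le_trans HN; apply: lerXn2r.
  - by rewrite nnegrE ltW //; case/andP: Hlam1.
  - by rewrite nnegrE; case/andP: q01.
  by rewrite le_max lexx.
have Hb1 : expR (- lam * N%:R) <= del.
  rewrite expRM_natr; apply: le_trans HN; apply: lerXn2r.
  - by rewrite nnegrE ltW // expR_gt0.
  - by rewrite nnegrE; case/andP: q01.
  by rewrite le_max lexx orbT.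
have step : forall eps w h, I eps -> `|eps| <= eps0 -> Omega' w -> psi h = 0 ->
    `|cocycle sigma (fun w => Ls w eps) (N + N) w h| <= c * `|h|.
  move=> eps w h Ie He0 Hw Hh.
  rewrite cocycle_add.
  set g := cocycle sigma (fun w => Ls w eps) N w h.
  set g0 := cocycle sigma (fun w => Ls w 0) N w h.
  apply: le_trans (Hb _ _ _ _ Ie (HOit _ _ Hw) N0) _.
  have F1 : `|g| <= M * `|h| by apply: Hbnd.
  have F3 : \sum_(j < N) `|cocycle sigma (fun w => Ls w 0) j w h| <= N%:R * (M * `|h|).
    apply: le_trans (_ : \sum_(j < N) (M * `|h|) <= _).
      by apply: ler_sum => j _; apply: Hbnd.
    by rewrite sumr_const card_ord mulr_natl.
  have F2 : `|iota g| <= K * `|eps| * (N%:R * (M * `|h|)) + D * expR (- lam * N%:R) * `|h|.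
    have -> : iota g = (iota g - iota g0) + iota g0 by rewrite subrK.
    apply: le_trans (ler_normD _ _) _; apply: lerD.
      apply: le_trans (tele _ Ie _ _ _ Hw) _.
      by apply: ler_wpM2l => //; rewrite mulr_ge0 // ltW.
    by apply: le_trans (Hiota_norm _) _; apply: Ha.
  set x := `|h|. set G := `|g|. set W := `|iota g|. set a := lam1 ^+ N.
  set b := expR (- lam * N%:R). set e := `|eps|.
  have x0 : 0 <= x := normr_ge0 _.
  have G0 : 0 <= G := normr_ge0 _.
  have a0 : 0 <= a by rewrite /a exprn_ge0 // ltW //; case/andP: Hlam1.
  have b0 : 0 <= b by rewrite /b ltW // expR_gt0.
  have e0 : 0 <= e := normr_ge0 _.
  have P1 : a * G <= del * (M * x).
    apply: le_trans (_ : del * G <= _); first by apply: ler_wpM2r.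
    by apply: ler_wpM2l => //; apply: ltW.
  have P2 : e * (N%:R * (M * x)) <= eps0 * (N%:R * (M * x)).
    by apply: ler_wpM2r => //; rewrite !mulr_ge0 // ltW.
  have P3 : b * x <= del * x by apply: ler_wpM2r.
  have E1 : C * del * (M + D) = c / 4.
    rewrite /del; field.
    by rewrite !gt_eqF // addr_gt0.
  have E2 : C * K * eps0 * N%:R * M = c / 2.
    rewrite /eps0; field.
    by rewrite !gt_eqF.
  have E1x : C * del * M * x + C * D * del * x = c / 4 * x by rewrite -E1; ring.
  have E2x : C * K * eps0 * N%:R * M * x = c / 2 * x by rewrite E2.
  have Q1 : C * (a * G) <= C * (del * (M * x)) by apply: ler_wpM2l => //; apply: ltW.
  have Q2 : C * (K * (e * (N%:R * (M * x)))) <= C * (K * (eps0 * (N%:R * (M * x)))).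
    by apply: ler_wpM2l; [apply: ltW | apply: ler_wpM2l => //; apply: ltW].
  have Q3 : C * (D * (b * x)) <= C * (D * (del * x)).
    by apply: ler_wpM2l; [apply: ltW | apply: ler_wpM2l => //; apply: ltW].
  have Q4 : C * W <= C * (K * e * (N%:R * (M * x)) + D * b * x).
    by apply: ler_wpM2l => //; apply: ltW.
  have cx : 0 <= c * x by rewrite mulr_ge0 // ltW.
  lra.
have Hiter : forall eps k w h, I eps -> `|eps| <= eps0 -> Omega' w -> psi h = 0 ->
    `|cocycle sigma (fun w => Ls w eps) (k * (N + N)) w h| <= c ^+ k * `|h|.
  move=> eps k w h Ie He0 Hw Hh; elim: k => [|k IH].
    by rewrite mul0n expr0 mul1r.
  rewrite mulSn cocycle_add.
  apply: le_trans (step _ _ _ Ie He0 (HOit _ _ Hw) (Hpsi0 _ _ _ _ Ie Hw Hh)) _.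
  by rewrite exprS -mulrA ler_wpM2l // ltW.
pose T := (N + N)%N.
have T0 : (0 < T)%N by rewrite /T addn_gt0 N0.
have Tr0 : 0 < (T%:R : R) by rewrite ltr0n.
exists eps0, (M / c), (T%:R^-1); split => //.
- by rewrite divr_gt0.
- by rewrite invr_gt0.
move=> eps w n h Ie He0 Hw Hh.
rewrite {1}(divn_eq n T) addnC cocycle_add.
set k := (n %/ T)%N.
apply: le_trans (Hbnd _ _ _ _ Ie (HOit _ _ Hw)) _.
apply: le_trans (_ : M * (c ^+ k * `|h|) <= _).
  by apply: ler_wpM2l; [apply: ltW | apply: Hiter].
have key : c ^+ k <= expR (- T%:R^-1 * n%:R) / c.
  rewrite ler_pdivlMr // -exprSr -expRM_natl ler_expR.
  rewrite mulrN1 mulNr lerN2 mulrC ler_pdivrMr //.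
  rewrite -natrM ler_nat ltnW // /k.
  exact: ltn_ceil.
have -> : M / c * expR (- T%:R^-1 * n%:R) * `|h| = M * (expR (- T%:R^-1 * n%:R) / c * `|h|) by ring.
apply: ler_wpM2l; first exact: ltW.
by apply: ler_wpM2r.
Qed.
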